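(* Let $M\subset\mathbb{R}^2$ be open with coordinates $(x,u)$, let $M^{(1)}$ be the first-order jet space with coordinates $(x,u,u_x)$, and consider the ODE $u_{xx}=\phi(x,u,u_x)$ with associated vector field $\mathbf{A}=\partial_x+u_x\partial_u+\phi\,\partial_{u_x}$. Let $(\partial_u,\lambda_1)$ and $(\partial_u,\lambda_2)$ be the canonical representatives of two non-equivalent generalized $\mathcal{C}^\infty$-symmetries of this ODE, with $\mathbf{A}$-equivalence classes $\mathcal{A}_1,\mathcal{A}_2$. Let $\mathbf{X}_i=\partial_u+\lambda_i\partial_{u_x}$, $\rho=\dfrac{\mathbf{X}_1(\lambda_2)-\mathbf{X}_2(\lambda_1)}{\lambda_1-\lambda_2}$, let $f_1,f_2\in C^\infty(M^{(1)})$ satisfy $\dfrac{\mathbf{X}_1(f_2)}{f_2}=\dfrac{\mathbf{X}_2(f_1)}{f_1}=\rho$, let $\mathbf{Y}_i=f_i\mathbf{X}_i$ and $\rho_i=\lambda_i-\mathbf{A}(f_i)/f_i$ ($i=1,2$), and assume $g_1,g_2\in C^\infty(M^{(1)})$ satisfy $\mathbf{A}(g_1)=\rho_1g_1$, $\mathbf{Y}_2(g_1)=0$, $\mathbf{A}(g_2)=\rho_2g_2$, $\mathbf{Y}_1(g_2)=0$. Let $h_i=f_ig_i$ and $\mathbf{Z}_i=h_i\partial_u+\mathbf{A}(h_i)\partial_{u_x}$ ($i=1,2$). Then: (1) $(h_1\partial_u,0)\in\mathcal{A}_1$ and $(h_2\partial_u,0)\in\mathcal{A}_2$; (2) $\mathbf{Z}_1$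 and $\mathbf{Z}_2$ are generalized symmetries of the ODE; (3) $[\mathbf{Z}_1,\mathbf{A}]=[\mathbf{Z}_2,\mathbf{A}]=[\mathbf{Z}_1,\mathbf{Z}_2]=0$.
   Context: All functions are smooth on $M^{(1)}$ and all statements are local, on an open set where $\lambda_1-\lambda_2$, $f_1,f_2,g_1,g_2$ do not vanish. For smooth $\xi,\eta,\lambda$ on $M^{(1)}$ and $\mathbf{v}=\xi\partial_x+\eta\partial_u$, the $\lambda$-prolongation is $\mathbf{v}^{[\lambda,(1)]}=\mathbf{v}+\big((\mathbf{A}+\lambda)(\eta)-(\mathbf{A}+\lambda)(\xi)u_x\big)\partial_{u_x}$. The pair $(\mathbf{v},\lambda)$ is a generalized $\mathcal{C}^\infty$-symmetry of the ODE if $[\mathbf{v}^{[\lambda,(1)]},\mathbf{A}]=\lambda\,\mathbf{v}^{[\lambda,(1)]}-(\mathbf{A}+\lambda)(\xi)\,\mathbf{A}$. When $(\mathbf{v},0)$ is a generalized $\mathcal{C}^\infty$-symmetry, the vector field $\mathbf{v}^{[0,(1)]}$ is called a generalized symmetry of the ODE. Two generalized $\mathcal{C}^\infty$-symmetries $(\mathbf{v}_1,\lambda_1)$, $(\mathbf{v}_2,\lambda_2)$ are $\mathbf{A}$-equivalent if $\{\mathbf{A},\mathbf{v}_1^{[\lambda_1,(1)]},\mathbf{v}_2^{[\lambda_2,(1)]}\}$ is linearly dependent over $C^\infty(M^{(1)})$; equivalence classes are $\mathbf{A}$-equivalence classes. If $Q=\eta-\xi u_x$, the canonical representative of the class of $(\mathbf{v},\lambda)$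 is $(\partial_u,\lambda+\mathbf{A}(Q)/Q)$. *)

(* Defs.v *)
From Stdlib Require Import Reals.
From Coquelicot Require Import Coquelicot.
Open Scope R_scope.

(* Smooth functions on (an open subset of) the jet space M^(1) with
   coordinates (x, u, p), p standing for u_x. *)
Definition fn := R -> R -> R -> R.
Definition pt := (R * R * R)%type.
Definition unc (F : fn) : pt -> R :=
  fun q => F (fst (fst q)) (snd (fst q)) (snd q).

Definition cst (c : R) : fn := fun _ _ _ => c.
Definition fadd (F G : fn) : fn := fun x u p => F x u p + G x u p.
Definition fsub (F G : fn) : fn := fun x u p => F x u p - G x u p.
Definition fmul (F G : fn) : fn := fun x u p => F x u p * G x u p.
Definition fdiv (F G : fn) : fn := fun x u p => F x u p / G x u p.
Definition coord_p : fn := fun _ _ p => p.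

Definition dx (F : fn) : fn := fun x u p => Derive (fun t => F t u p) x.
Definition du (F : fn) : fn := fun x u p => Derive (fun t => F x t p) u.
Definition dp (F : fn) : fn := fun x u p => Derive (fun t => F x u t) p.

Inductive dir := Dx | Du | Dp.
Definition dpart (d : dir) : fn -> fn :=
  match d with Dx => dx | Du => du | Dp => dp end.
Definition slice_derivable (d : dir) (F : fn) (x u p : R) : Prop :=
  match d with
  | Dx => ex_derive (fun t => F t u p) x
  | Du => ex_derive (fun t => F x t p) u
  | Dp => ex_derive (fun t => F x u t) p
  end.
Fixpoint iter_part (l : list dir) (F : fn) : fn :=
  match l with nil => F | cons d l' => dpart d (iter_part l' F) end.

Definition smooth_on (U : pt -> Prop) (F : fn) : Prop :=
  forall (l : list dir) (x u p : R), U (x, u, p) ->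
    continuous (unc (iter_part l F)) (x, u, p) /\
    forall d, slice_derivable d (iter_part l F) x u p.

(* Vector fields  cx d_x + cu d_u + cp d_{u_x}  on M^(1). *)
Record VF := mkVF { cx : fn; cu : fn; cp : fn }.

Definition app (V : VF) (F : fn) : fn := fun x u p =>
  cx V x u p * dx F x u p + cu V x u p * du F x u p + cp V x u p * dp F x u p.

Definition bracket (V W : VF) : VF :=
  mkVF (fsub (app V (cx W)) (app W (cx V)))
       (fsub (app V (cu W)) (app W (cu V)))
       (fsub (app V (cp W)) (app W (cp V))).

Definition vscale (a : fn) (V : VF) : VF :=
  mkVF (fmul a (cx V)) (fmul a (cu V)) (fmul a (cp V)).
Definition vadd (V W : VF) : VF :=
  mkVF (fadd (cx V) (cx W)) (fadd (cu V) (cu W)) (fadd (cp V) (cp W)).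
Definition vsub (V W : VF) : VF :=
  mkVF (fsub (cx V) (cx W)) (fsub (cu V) (cu W)) (fsub (cp V) (cp W)).

Definition vf_eq_on (U : pt -> Prop) (V W : VF) : Prop :=
  forall x u p, U (x, u, p) ->
    cx V x u p = cx W x u p /\ cu V x u p = cu W x u p /\
    cp V x u p = cp W x u p.

Definition Avf (phi : fn) : VF := mkVF (cst 1) coord_p phi.

Definition Apl (phi lam F : fn) : fn := fadd (app (Avf phi) F) (fmul lam F).

Definition prolong (phi xi eta lam : fn) : VF :=
  mkVF xi eta (fsub (Apl phi lam eta) (fmul (Apl phi lam xi) coord_p)).

Definition gen_Cinf_sym (U : pt -> Prop) (phi xi eta lam : fn) : Prop :=
  smooth_on U xi /\ smooth_on U eta /\ smooth_on U lam /\
  vf_eq_on U (bracket (prolong phi xi eta lam) (Avf phi))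
             (vsub (vscale lam (prolong phi xi eta lam))
                   (vscale (Apl phi lam xi) (Avf phi))).

Definition gen_symmetry (U : pt -> Prop) (phi : fn) (Z : VF) : Prop :=
  exists xi eta, gen_Cinf_sym U phi xi eta (cst 0) /\
                 vf_eq_on U Z (prolong phi xi eta (cst 0)).

Definition lin_dep_on (U : pt -> Prop) (V1 V2 V3 : VF) : Prop :=
  exists a b c : fn, smooth_on U a /\ smooth_on U b /\ smooth_on U c /\
    ~ (forall x u p, U (x, u, p) ->
          a x u p = 0 /\ b x u p = 0 /\ c x u p = 0) /\
    vf_eq_on U (vadd (vadd (vscale a V1) (vscale b V2)) (vscale c V3))
               (mkVF (cst 0) (cst 0) (cst 0)).

Definition A_equiv (U : pt -> Prop) (phi xi1 eta1 lam1 xi2 eta2 lam2 : fn)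
  : Prop :=
  lin_dep_on U (Avf phi) (prolong phi xi1 eta1 lam1) (prolong phi xi2 eta2 lam2).

Definition in_class (U : pt -> Prop) (phi xi eta lam xi0 eta0 lam0 : fn)
  : Prop :=
  gen_Cinf_sym U phi xi eta lam /\ A_equiv U phi xi eta lam xi0 eta0 lam0.

Definition Xvf (lam : fn) : VF := mkVF (cst 0) (cst 1) lam.

(* Main.v *)
Require Import Defs.
From Stdlib Require Import Reals.
From Coquelicot Require Import Coquelicot.
From Stdlib Require Import Lra FunctionalExtensionality.
From Stdlib Require List.
Import List.ListNotations.
Open Scope list_scope.
Open Scope R_scope.
Definition sl (d : dir) (F : fn) x u p : R -> R :=
  match d with Defs.Dx => fun t => F t u p | Defs.Du => fun t => F x t p | Defs.Dp => fun t => F x u t end.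
Definition co (d : dir) (x u p : R) : R :=
  match d with Defs.Dx => x | Defs.Du => u | Defs.Dp => p end.

Lemma dpart_sl d F x u p : dpart d F x u p = Derive (sl d F x u p) (co d x u p).
Proof. destruct d; reflexivity. Qed.
Lemma sd_sl d F x u p : slice_derivable d F x u p <-> ex_derive (sl d F x u p) (co d x u p).
Proof. destruct d; reflexivity. Qed.

Lemma loc_slice (U : pt -> Prop) d x u p : open U -> U (x,u,p) ->
  locally (co d x u p) (fun t => U (match d with Defs.Dx => (t,u,p) | Defs.Du => (x,t,p) | Defs.Dp => (x,u,t) end)).
Proof.
  intros HU Hq. destruct (HU _ Hq) as [e He]. exists e. intros y Hy.
  apply He. destruct d; simpl in *; repeat split; try apply ball_center; exact Hy.
Qed.

Lemma loc_eq (U : pt -> Prop) d G H x u p : open U -> U (x,u,p) ->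
  (forall x u p, U (x,u,p) -> G x u p = H x u p) ->
  locally (co d x u p) (fun t => sl d G x u p t = sl d H x u p t).
Proof.
  intros HU Hq E. generalize (loc_slice U d x u p HU Hq). apply filter_imp.
  intros t Ht. destruct d; simpl; apply E; exact Ht.
Qed.

Lemma dpart_U (U : pt -> Prop) d G H x u p : open U -> U (x,u,p) ->
  (forall x u p, U (x,u,p) -> G x u p = H x u p) ->
  dpart d G x u p = dpart d H x u p.
Proof.
  intros HU Hq E. rewrite !dpart_sl. apply Derive_ext_loc. apply (loc_eq U); auto.
Qed.

Lemma sd_U (U : pt -> Prop) d G H x u p : open U -> U (x,u,p) ->
  (forall x u p, U (x,u,p) -> G x u p = H x u p) ->
  slice_derivable d G x u p -> slice_derivable d H x u p.
Proof.
  intros HU Hq E. rewrite !sd_sl. apply ex_derive_ext_loc. apply (loc_eq U); auto.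
Qed.

Fixpoint sp (F G : fn) (L : list (list dir * list dir)) : fn :=
  match L with
  | nil => cst 0
  | (a,b) :: L' => fun x u p => iter_part a F x u p * iter_part b G x u p + sp F G L' x u p
  end.

Definition dL (d : dir) (L : list (list dir * list dir)) :=
  List.flat_map (fun ab => (d :: fst ab, snd ab) :: (fst ab, d :: snd ab) :: nil) L.

Lemma sl_cons d F G a b L x u p :
  sl d (sp F G ((a,b)::L)) x u p =
  fun t => sl d (iter_part a F) x u p t * sl d (iter_part b G) x u p t + sl d (sp F G L) x u p t.
Proof. destruct d; reflexivity. Qed.

Lemma sl_nil d F G x u p : sl d (sp F G nil) x u p = fun _ => 0.
Proof. destruct d; reflexivity. Qed.

Lemma deriv_sp (U : pt -> Prop) F G d x u p : smooth_on U F -> smooth_on U G -> U (x,u,p) ->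
  forall L, ex_derive (sl d (sp F G L) x u p) (co d x u p) /\
   Derive (sl d (sp F G L) x u p) (co d x u p) = sp F G (dL d L) x u p.
Proof.
  intros SF SG Hq. induction L as [|[a b] L IH].
  - rewrite sl_nil. split. apply ex_derive_const. rewrite Derive_const. reflexivity.
  - destruct IH as [IH1 IH2]. rewrite sl_cons.
    assert (Da : ex_derive (sl d (iter_part a F) x u p) (co d x u p))
      by (apply sd_sl; apply (proj2 (SF a x u p Hq))).
    assert (Db : ex_derive (sl d (iter_part b G) x u p) (co d x u p))
      by (apply sd_sl; apply (proj2 (SG b x u p Hq))).
    split.
    + apply (ex_derive_plus (fun t => _ * _) (sl d (sp F G L) x u p)); [apply ex_derive_mult|]; auto.
    + rewrite Derive_plus; [|apply ex_derive_mult; auto|auto].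
      rewrite Derive_mult; auto. rewrite IH2.
      rewrite <- !dpart_sl. simpl. ring_simplify.
      change (dpart d (iter_part a F) x u p) with (iter_part (d::a) F x u p).
      change (dpart d (iter_part b G) x u p) with (iter_part (d::b) G x u p).
      destruct d; simpl; unfold sl; simpl; try ring.
Qed.

Lemma iter_prod (U : pt -> Prop) F G : open U -> smooth_on U F -> smooth_on U G ->
  forall l, exists L, forall x u p, U (x,u,p) -> iter_part l (fmul F G) x u p = sp F G L x u p.
Proof.
  intros HU SF SG. induction l as [|d l IH].
  - exists ((nil,nil)::nil). intros. simpl. unfold fmul, cst. ring.
  - destruct IH as [L HL]. exists (dL d L). intros x u p Hq.
    change (iter_part (d::l) (fmul F G) x u p) with (dpart d (iter_part l (fmul F G)) x u p).
    rewrite (dpart_U U d _ (sp F G L)); auto.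
    rewrite dpart_sl. apply (deriv_sp U); auto.
Qed.

Lemma cont_sp (U : pt -> Prop) F G q : smooth_on U F -> smooth_on U G -> U q ->
  forall L, continuous (unc (sp F G L)) q.
Proof.
  intros SF SG Hq. destruct q as [[x u] p].
  induction L as [|[a b] L IH].
  - apply continuous_const.
  - apply (continuous_plus (fun y => unc (iter_part a F) y * unc (iter_part b G) y) (unc (sp F G L))); auto.
    apply (continuous_mult (unc (iter_part a F)) (unc (iter_part b G))).
    apply (proj1 (SF a x u p Hq)). apply (proj1 (SG b x u p Hq)).
Qed.

Lemma smooth_mul (U : pt -> Prop) F G : open U -> smooth_on U F -> smooth_on U G ->
  smooth_on U (fmul F G).
Proof.
  intros HU SF SG l x u p Hq. destruct (iter_prod U F G HU SF SG l) as [L HL].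
  split.
  - apply (continuous_ext_loc _ (unc (sp F G L))).
    + generalize (HU _ Hq). apply filter_imp. intros [[x' u'] p'] H'. unfold unc; simpl.
      symmetry. apply HL. exact H'.
    + apply (cont_sp U); auto.
  - intros d. apply (sd_U U d (sp F G L)); auto.
    intros. symmetry; auto. apply sd_sl. apply (deriv_sp U); auto.
Qed.

Lemma dpart_cst d c : dpart d (cst c) = cst 0.
Proof.
  apply functional_extensionality; intro x; apply functional_extensionality; intro u;
  apply functional_extensionality; intro p. rewrite dpart_sl.
  destruct d; simpl; unfold cst; apply Derive_const.
Qed.

Lemma smooth_cst (U : pt -> Prop) c : smooth_on U (cst c).
Proof.
  intros l x u p Hq.
  assert (E : exists k, iter_part l (cst c) = cst k).
  { induction l as [|d l [k IH]]. exists c; reflexivity. exists 0. simpl. rewrite IH. apply dpart_cst. }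
  destruct E as [k E]. rewrite E. split.
  - apply continuous_const.
  - intros d. apply sd_sl. destruct d; apply ex_derive_const.
Qed.
Lemma dx_cst c : dx (cst c) = cst 0. Proof. exact (dpart_cst Defs.Dx c). Qed.
Lemma du_cst c : du (cst c) = cst 0. Proof. exact (dpart_cst Defs.Du c). Qed.
Lemma dp_cst c : dp (cst c) = cst 0. Proof. exact (dpart_cst Defs.Dp c). Qed.

Ltac fext := apply functional_extensionality; intro; apply functional_extensionality; intro;
  apply functional_extensionality; intro.

Lemma dx_p : dx coord_p = cst 0.
Proof. fext. unfold dx, coord_p, cst. apply Derive_const. Qed.
Lemma du_p : du coord_p = cst 0.
Proof. fext. unfold du, coord_p, cst. apply Derive_const. Qed.
Lemma dp_p : dp coord_p = cst 1.
Proof. fext. unfold dp, coord_p, cst. apply Derive_id. Qed.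

Lemma app_cst V c : app V (cst c) = cst 0.
Proof. fext. unfold app. rewrite dx_cst, du_cst, dp_cst. unfold cst. ring. Qed.

Lemma prolong_X phi l : prolong phi (cst 0) (cst 1) l = Xvf l.
Proof. unfold prolong, Xvf, Apl. f_equal. rewrite !app_cst. fext. unfold fsub, fadd, fmul, cst. ring. Qed.

Lemma prolong_Z phi h : prolong phi (cst 0) h (cst 0) = mkVF (cst 0) h (app (Avf phi) h).
Proof. unfold prolong, Apl. f_equal. rewrite !app_cst. fext. unfold fsub, fadd, fmul, cst. ring. Qed.

Lemma sym_cond U phi l : gen_Cinf_sym U phi (cst 0) (cst 1) l -> forall x u p, U (x,u,p) ->
  du phi x u p + l x u p * dp phi x u p - (dx l x u p + p * du l x u p + phi x u p * dp l x u p)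
  = l x u p * l x u p.
Proof.
  intros [_ [_ [_ H]]] x u p Hq. rewrite prolong_X in H. destruct (H x u p Hq) as [_ [_ H3]].
  unfold bracket, vsub, vscale, Xvf, Avf, Apl in H3; simpl in H3. rewrite app_cst in H3.
  unfold app, fsub, fmul, fadd, cst, coord_p in H3. simpl in H3. etransitivity; [|etransitivity; [apply H3|]]; ring.
Qed.

Lemma dprod U d F G x u p : smooth_on U F -> smooth_on U G -> U (x,u,p) ->
  dpart d (fmul F G) x u p = dpart d F x u p * G x u p + F x u p * dpart d G x u p.
Proof.
  intros SF SG Hq. rewrite !dpart_sl.
  replace (sl d (fmul F G) x u p) with (fun t => sl d F x u p t * sl d G x u p t)
    by (destruct d; reflexivity).
  rewrite Derive_mult.
  - destruct d; reflexivity.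
  - apply sd_sl. apply (proj2 (SF nil x u p Hq)).
  - apply sd_sl. apply (proj2 (SG nil x u p Hq)).
Qed.

Lemma dx_mul U F G x u p : smooth_on U F -> smooth_on U G -> U (x,u,p) ->
  dx (fmul F G) x u p = dx F x u p * G x u p + F x u p * dx G x u p.
Proof. exact (dprod U Defs.Dx F G x u p). Qed.
Lemma du_mul U F G x u p : smooth_on U F -> smooth_on U G -> U (x,u,p) ->
  du (fmul F G) x u p = du F x u p * G x u p + F x u p * du G x u p.
Proof. exact (dprod U Defs.Du F G x u p). Qed.
Lemma dp_mul U F G x u p : smooth_on U F -> smooth_on U G -> U (x,u,p) ->
  dp (fmul F G) x u p = dp F x u p * G x u p + F x u p * dp G x u p.
Proof. exact (dprod U Defs.Dp F G x u p). Qed.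

Lemma dx_U (U : pt -> Prop) G H x u p : open U -> U (x,u,p) ->
  (forall x u p, U (x,u,p) -> G x u p = H x u p) -> dx G x u p = dx H x u p.
Proof. exact (dpart_U U Defs.Dx G H x u p). Qed.
Lemma du_U (U : pt -> Prop) G H x u p : open U -> U (x,u,p) ->
  (forall x u p, U (x,u,p) -> G x u p = H x u p) -> du G x u p = du H x u p.
Proof. exact (dpart_U U Defs.Du G H x u p). Qed.
Lemma dp_U (U : pt -> Prop) G H x u p : open U -> U (x,u,p) ->
  (forall x u p, U (x,u,p) -> G x u p = H x u p) -> dp G x u p = dp H x u p.
Proof. exact (dpart_U U Defs.Dp G H x u p). Qed.

Lemma AH U phi f g l : smooth_on U f -> smooth_on U g ->
  (forall x u p, U (x,u,p) -> f x u p <> 0) ->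
  (forall x u p, U (x,u,p) -> app (Avf phi) g x u p =
     fsub l (fdiv (app (Avf phi) f) f) x u p * g x u p) ->
  forall x u p, U (x,u,p) -> app (Avf phi) (fmul f g) x u p = l x u p * fmul f g x u p.
Proof.
  intros Sf Sg Nf Hg x u p Hq. specialize (Hg x u p Hq). specialize (Nf x u p Hq).
  unfold app in *. rewrite (dx_mul U), (du_mul U), (dp_mul U); auto.
  unfold Avf, fsub, fdiv, fmul, cst, coord_p in *; simpl in *.
  set (Af := 1 * dx f x u p + p * du f x u p + phi x u p * dp f x u p) in *.
  set (Ag := 1 * dx g x u p + p * du g x u p + phi x u p * dp g x u p) in *.
  transitivity (Af * g x u p + f x u p * Ag). unfold Af, Ag; ring.
  rewrite Hg. field. auto.
Qed.

Lemma ZA U phi l h : open U -> smooth_on U h -> smooth_on U l ->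
  gen_Cinf_sym U phi (cst 0) (cst 1) l ->
  (forall x u p, U (x,u,p) -> app (Avf phi) h x u p = l x u p * h x u p) ->
  vf_eq_on U (bracket (mkVF (cst 0) h (app (Avf phi) h)) (Avf phi)) (mkVF (cst 0) (cst 0) (cst 0)).
Proof.
  intros HU Sh Sl Hs Ah x u p Hq. unfold bracket; simpl. rewrite !app_cst.
  generalize (sym_cond U phi l Hs x u p Hq); intro Es.
  split; [|split].
  - unfold fsub, cst. ring.
  - unfold fsub, app, cst, Avf; simpl. rewrite dx_p, du_p, dp_p. unfold cst.
    ring.
  - unfold fsub. 
    assert (L : forall x u p, U (x,u,p) -> app (Avf phi) h x u p = fmul l h x u p) by exact Ah.
    change (app (Avf phi) (app (Avf phi) h) x u p) with (1 * dx (app (Avf phi) h) x u p + p * du (app (Avf phi) h) x u p + phi x u p * dp (app (Avf phi) h) x u p).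
    rewrite (dx_U U _ _ x u p HU Hq L), (du_U U _ _ x u p HU Hq L), (dp_U U _ _ x u p HU Hq L).
    rewrite (dx_mul U), (du_mul U), (dp_mul U); auto.
    generalize (Ah x u p Hq). unfold app; simpl. unfold cst, coord_p. intro E.
    unfold app; simpl. unfold cst, coord_p.
    assert (E1 : du phi x u p = l x u p * l x u p - l x u p * dp phi x u p
       + (dx l x u p + p * du l x u p + phi x u p * dp l x u p)) by (rewrite <- Es; ring).
    assert (E2 : dx h x u p = l x u p * h x u p - p * du h x u p - phi x u p * dp h x u p)
      by (rewrite <- E; ring).
    rewrite E1, E2. ring.
Qed.

Lemma LD U phi l h : (exists q, U q) -> open U -> smooth_on U h ->
  (forall x u p, U (x,u,p) -> app (Avf phi) h x u p = l x u p * h x u p) ->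
  lin_dep_on U (Avf phi) (prolong phi (cst 0) h (cst 0)) (prolong phi (cst 0) (cst 1) l).
Proof.
  intros Hne HU Sh Ah. rewrite prolong_Z, prolong_X.
  exists (cst 0), (cst 1), (fmul (cst (-1)) h).
  split; [apply smooth_cst|split; [apply smooth_cst|split; [apply smooth_mul; auto; apply smooth_cst|split]]].
  - intros H. destruct Hne as [[[x u] p] Hq]. destruct (H x u p Hq) as [_ [Hb _]].
    unfold cst in Hb. lra.
  - intros x u p Hq. generalize (Ah x u p Hq). intro E. unfold Avf, cst in E.
    unfold vadd, vscale, Avf, Xvf; simpl. unfold fadd, fmul, cst.
    rewrite E. repeat split; ring.
Qed.

Lemma app_Z h k F x u p : app (mkVF (cst 0) h k) F x u p = h x u p * du F x u p + k x u p * dp F x u p.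
Proof. unfold app, cst; simpl. ring. Qed.

Lemma Z1Z2 U phi l1 l2 f1 f2 g1 g2 R : open U ->
  smooth_on U l1 -> smooth_on U l2 -> smooth_on U f1 -> smooth_on U f2 ->
  smooth_on U g1 -> smooth_on U g2 ->
  (forall x u p, U (x,u,p) ->
    app (Xvf l1) f2 x u p = R x u p * f2 x u p /\
    app (Xvf l2) f1 x u p = R x u p * f1 x u p /\
    app (Xvf l1) g2 x u p = 0 /\ app (Xvf l2) g1 x u p = 0 /\
    R x u p * (l1 x u p - l2 x u p) = app (Xvf l1) l2 x u p - app (Xvf l2) l1 x u p) ->
  (forall x u p, U (x,u,p) -> app (Avf phi) (fmul f1 g1) x u p = l1 x u p * fmul f1 g1 x u p) ->
  (forall x u p, U (x,u,p) -> app (Avf phi) (fmul f2 g2) x u p = l2 x u p * fmul f2 g2 x u p) ->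
  vf_eq_on U (bracket (mkVF (cst 0) (fmul f1 g1) (app (Avf phi) (fmul f1 g1)))
                      (mkVF (cst 0) (fmul f2 g2) (app (Avf phi) (fmul f2 g2))))
             (mkVF (cst 0) (cst 0) (cst 0)).
Proof.
  intros HU Sl1 Sl2 Sf1 Sf2 Sg1 Sg2 HE A1 A2 x u p Hq.
  assert (Sh1 : smooth_on U (fmul f1 g1)) by (apply smooth_mul; auto).
  assert (Sh2 : smooth_on U (fmul f2 g2)) by (apply smooth_mul; auto).
  destruct (HE x u p Hq) as [E1 [E2 [E3 [E4 E5]]]].
  unfold app, Xvf in E1, E2, E3, E4, E5; simpl in E1, E2, E3, E4, E5; unfold cst in E1, E2, E3, E4, E5.
  assert (F2 : du f2 x u p = R x u p * f2 x u p - l1 x u p * dp f2 x u p) by (rewrite <- E1; ring).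
  assert (F1 : du f1 x u p = R x u p * f1 x u p - l2 x u p * dp f1 x u p) by (rewrite <- E2; ring).
  assert (G2 : du g2 x u p = - (l1 x u p * dp g2 x u p)) by (transitivity ((0 * dx g2 x u p + 1 * du g2 x u p + l1 x u p * dp g2 x u p) - l1 x u p * dp g2 x u p); [ring| rewrite E3; ring]).
  assert (G1 : du g1 x u p = - (l2 x u p * dp g1 x u p)) by (transitivity ((0 * dx g1 x u p + 1 * du g1 x u p + l2 x u p * dp g1 x u p) - l2 x u p * dp g1 x u p); [ring| rewrite E4; ring]).
  assert (L2 : du l2 x u p = R x u p * (l1 x u p - l2 x u p) - l1 x u p * dp l2 x u p + du l1 x u p + l2 x u p * dp l1 x u p) by (rewrite E5; ring).
  assert (B1 : forall x u p, U (x,u,p) -> app (Avf phi) (fmul f1 g1) x u p = fmul l1 (fmul f1 g1) x u p) by exact A1.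
  assert (B2 : forall x u p, U (x,u,p) -> app (Avf phi) (fmul f2 g2) x u p = fmul l2 (fmul f2 g2) x u p) by exact A2.
  unfold bracket; simpl. rewrite !app_cst. unfold fsub. rewrite !app_Z.
  split; [|split].
  - unfold cst; ring.
  - rewrite (A1 x u p Hq), (A2 x u p Hq).
    rewrite (du_mul U f1 g1), (du_mul U f2 g2), (dp_mul U f1 g1), (dp_mul U f2 g2); auto.
    rewrite F1, F2, G1, G2. unfold fmul, cst. ring.
  - rewrite (du_U U _ _ x u p HU Hq B1), (du_U U _ _ x u p HU Hq B2),
            (dp_U U _ _ x u p HU Hq B1), (dp_U U _ _ x u p HU Hq B2).
    rewrite (A1 x u p Hq), (A2 x u p Hq).
    rewrite (du_mul U l1 (fmul f1 g1)), (du_mul U l2 (fmul f2 g2)),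
            (dp_mul U l1 (fmul f1 g1)), (dp_mul U l2 (fmul f2 g2)); auto.
    rewrite (du_mul U f1 g1), (du_mul U f2 g2), (dp_mul U f1 g1), (dp_mul U f2 g2); auto.
    rewrite L2, F1, F2, G1, G2. unfold fmul, cst. ring.
Qed.

Lemma GS U phi l h : open U -> smooth_on U h -> smooth_on U l ->
  gen_Cinf_sym U phi (cst 0) (cst 1) l ->
  (forall x u p, U (x,u,p) -> app (Avf phi) h x u p = l x u p * h x u p) ->
  gen_Cinf_sym U phi (cst 0) h (cst 0).
Proof.
  intros HU Sh Sl Hs Ah. split; [apply smooth_cst|split; [auto|split; [apply smooth_cst|]]].
  rewrite prolong_Z. intros x u p Hq.
  destruct (ZA U phi l h HU Sh Sl Hs Ah x u p Hq) as [a [b c]]. rewrite a, b, c.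
  unfold vsub, vscale, Apl; simpl. rewrite app_cst. unfold fsub, fmul, fadd, cst. repeat split; ring.
Qed.

Lemma app_vscale f V F x u p : app (vscale f V) F x u p = f x u p * app V F x u p.
Proof. unfold app, vscale, fmul; simpl. ring. Qed.

Theorem theorem2 (U : pt -> Prop) (phi l1 l2 f1 f2 g1 g2 : fn) :
  open U -> (exists q, U q) ->
  smooth_on U phi ->
  gen_Cinf_sym U phi (cst 0) (cst 1) l1 ->
  gen_Cinf_sym U phi (cst 0) (cst 1) l2 ->
  ~ A_equiv U phi (cst 0) (cst 1) l1 (cst 0) (cst 1) l2 ->
  smooth_on U f1 -> smooth_on U f2 -> smooth_on U g1 -> smooth_on U g2 ->
  (forall x u p, U (x, u, p) ->
     l1 x u p - l2 x u p <> 0 /\ f1 x u p <> 0 /\ f2 x u p <> 0 /\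
     g1 x u p <> 0 /\ g2 x u p <> 0) ->
  let rho := fdiv (fsub (app (Xvf l1) l2) (app (Xvf l2) l1)) (fsub l1 l2) in
  (forall x u p, U (x, u, p) ->
     app (Xvf l1) f2 x u p / f2 x u p = rho x u p /\
     app (Xvf l2) f1 x u p / f1 x u p = rho x u p) ->
  let Y1 := vscale f1 (Xvf l1) in
  let Y2 := vscale f2 (Xvf l2) in
  let rho1 := fsub l1 (fdiv (app (Avf phi) f1) f1) in
  let rho2 := fsub l2 (fdiv (app (Avf phi) f2) f2) in
  (forall x u p, U (x, u, p) ->
     app (Avf phi) g1 x u p = rho1 x u p * g1 x u p /\
     app Y2 g1 x u p = 0 /\
     app (Avf phi) g2 x u p = rho2 x u p * g2 x u p /\
     app Y1 g2 x u p = 0) ->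
  let h1 := fmul f1 g1 in
  let h2 := fmul f2 g2 in
  let Z1 := mkVF (cst 0) h1 (app (Avf phi) h1) in
  let Z2 := mkVF (cst 0) h2 (app (Avf phi) h2) in
  (in_class U phi (cst 0) h1 (cst 0) (cst 0) (cst 1) l1 /\
   in_class U phi (cst 0) h2 (cst 0) (cst 0) (cst 1) l2) /\
  (gen_symmetry U phi Z1 /\ gen_symmetry U phi Z2) /\
  (vf_eq_on U (bracket Z1 (Avf phi)) (mkVF (cst 0) (cst 0) (cst 0)) /\
   vf_eq_on U (bracket Z2 (Avf phi)) (mkVF (cst 0) (cst 0) (cst 0)) /\
   vf_eq_on U (bracket Z1 Z2) (mkVF (cst 0) (cst 0) (cst 0))).
Proof.
  intros HU Hne Sphi S1 S2 NE Sf1 Sf2 Sg1 Sg2 NZ rho HR Y1 Y2 rho1 rho2 HG h1 h2 Z1 Z2.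
  assert (Sh1 : smooth_on U h1) by (apply smooth_mul; auto).
  assert (Sh2 : smooth_on U h2) by (apply smooth_mul; auto).
  assert (Sl1 : smooth_on U l1) by exact (proj1 (proj2 (proj2 S1))).
  assert (Sl2 : smooth_on U l2) by exact (proj1 (proj2 (proj2 S2))).
  assert (A1 : forall x u p, U (x,u,p) -> app (Avf phi) h1 x u p = l1 x u p * h1 x u p).
  { apply (AH U phi f1 g1 l1); auto.
    intros x u p Hq; apply (NZ x u p Hq).
    intros x u p Hq; apply (HG x u p Hq). }
  assert (A2 : forall x u p, U (x,u,p) -> app (Avf phi) h2 x u p = l2 x u p * h2 x u p).
  { apply (AH U phi f2 g2 l2); auto.
    intros x u p Hq; apply (NZ x u p Hq).
    intros x u p Hq; apply (HG x u p Hq). }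
  split; [split|split; [split|split; [|split]]].
  - split. apply (GS U phi l1); auto. apply LD; auto.
  - split. apply (GS U phi l2); auto. apply LD; auto.
  - exists (cst 0), h1. split. apply (GS U phi l1); auto.
    rewrite prolong_Z. intros x u p Hq. repeat split.
  - exists (cst 0), h2. split. apply (GS U phi l2); auto.
    rewrite prolong_Z. intros x u p Hq. repeat split.
  - apply (ZA U phi l1); auto.
  - apply (ZA U phi l2); auto.
  - apply (Z1Z2 U phi l1 l2 f1 f2 g1 g2 rho); auto.
    intros x u p Hq. destruct (NZ x u p Hq) as [N1 [N2 [N3 [N4 N5]]]].
    destruct (HR x u p Hq) as [R1 R2]. destruct (HG x u p Hq) as [_ [G1 [_ G2]]].
    unfold Y1, Y2 in G1, G2. rewrite app_vscale in G1, G2.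
    split; [|split; [|split; [|split]]].
    + rewrite <- R1. field. auto.
    + rewrite <- R2. field. auto.
    + destruct (Rmult_integral _ _ G2) as [H|H]; [contradiction|exact H].
    + destruct (Rmult_integral _ _ G1) as [H|H]; [contradiction|exact H].
    + unfold rho, fdiv, fsub. field. auto.
Qed.
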